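(* Let $(V_k)_{k=1,\dots,K}$ be a $\sigma$-admissible family of affine spaces for some $\sigma>0$. For $w\in W$ let $u_k^*(w)$, $k=1,\dots,K$, be the PBDW estimators, and define $u^*(w)=u^*_{k^*}(w)$. (i) If $k^*=k^*(w)$ is any minimizer of $k\mapsto\operatorname{dist}(u_k^*(w),\mathcal M)$ over $\{1,\dots,K\}$, then $$\sup_{u\in\mathcal M}\|u-u^*(P_Wu)\|\le\delta_\sigma.$$ (ii) If $\mathcal S:V\to[0,\infty)$ satisfies $r\operatorname{dist}(v,\mathcal M)\le\mathcal S(v)\le R\operatorname{dist}(v,\mathcal M)$ for all $v\in V$ with constants $0<r\le R$, and $k^*=k^*(w)$ is any minimizer of $k\mapsto\mathcal S(u_k^*(w))$, then $$\sup_{u\in\mathcal M}\|u-u^*(P_Wu)\|\le\delta_{\kappa\sigma},\qquad\kappa=R/r.$$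
   Context: $V$ is a real Hilbert space, $\mathcal M\subset V$ is compact, $W\subset V$ is a subspace of finite dimension $m$, $P_W$ is the orthogonal projection onto $W$ and $W^\perp$ its orthogonal complement. For a linear subspace $\bar V$ with $\bar V\cap W^\perp=\{0\}$, $\mu(\bar V,W)=\max_{v\in\bar V,\,v\ne0}\|v\|/\|P_Wv\|$ (set $\mu(\{0\},W)=1$). A family of affine spaces $V_k=\bar u_k+\bar V_k$ ($\bar u_k\in V$, $\bar V_k$ linear of dimension $n_k\le m$, $\bar V_k\cap W^\perp=\{0\}$), $k=1,\dots,K$, is $\sigma$-admissible if there is a partition $\mathcal M=\bigcup_{k=1}^K\mathcal M_k$ and numbers $\varepsilon_k$ with $\operatorname{dist}(\mathcal M_k,V_k):=\sup_{u\in\mathcal M_k}\operatorname{dist}(u,V_k)\le\varepsilon_k$ and $\mu(\bar V_k,W)\,\varepsilon_k\le\sigma$ for all $k$. The PBDW estimators are $u_k^*(w)=\operatorname{argmin}\{\operatorname{dist}(v,V_k): v\in w+W^\perp\}$. For $\sigma\ge0$, $\mathcal M_\sigma=\{v\in V:\operatorname{dist}(v,\mathcal M)\le\sigma\}$ and $\delta_\sigma=\sup\{\|u-v\|: u,v\in\mathcal M_\sigma,\ u-v\in W^\perp\}$. *)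

(* Defs.v *)
From HB Require Import structures.
From mathcomp Require Import all_boot all_order all_algebra.
From mathcomp Require Import all_classical all_reals all_analysis.
Set Implicit Arguments. Unset Strict Implicit. Unset Printing Implicit Defensive.
Import Order.TTheory GRing.Theory Num.Theory.
Import numFieldNormedType.Exports.
Local Open Scope classical_set_scope.
Local Open Scope ring_scope.

Section Defs.
Variables (R : realType) (V : normedModType R).

Definition is_inner_product (ip : V -> V -> R) : Prop :=
  (forall u v, ip u v = ip v u) /\
  (forall a u v w, ip (a *: u + v) w = a * ip u w + ip v w) /\
  (forall v, ip v v = `|v| ^+ 2).

Definition lspan (n : nat) (e : 'I_n -> V) : set V :=
  range (fun c : 'I_n -> R => \sum_(i < n) c i *: e i).

Definition lin_indep (n : nat) (e : 'I_n -> V) : Prop :=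
  forall c : 'I_n -> R, \sum_(i < n) c i *: e i = 0 -> forall i, c i = 0.

Definition orth (ip : V -> V -> R) (W : set V) : set V :=
  [set v | forall w, W w -> ip v w = 0].

Definition is_orth_proj (ip : V -> V -> R) (W : set V) (P : V -> V) : Prop :=
  forall v, W (P v) /\ orth ip W (v - P v).

(* distance from a point to a set, in the extended reals (inf of the empty set = +oo) *)
Definition dist_set (v : V) (A : set V) : \bar R :=
  ereal_inf [set (`|v - a|)%:E | a in A].

Definition mu (P : V -> V) (Vbar : set V) : \bar R :=
  if `[< Vbar `<=` [set 0] >] then 1%E
  else ereal_sup [set (`|v| / `|P v|)%:E | v in Vbar `\ 0].

Definition Msig (M : set V) (s : R) : set V := [set v | (dist_set v M <= s%:E)%E].

Definition delta (ip : V -> V -> R) (W : set V) (M : set V) (s : R) : \bar R :=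
  ereal_sup [set x : \bar R | exists u v : V,
     [/\ Msig M s u, Msig M s v, orth ip W (u - v) & x = (`|u - v|)%:E]].

Definition affine (ubar : V) (n : nat) (e : 'I_n -> V) : set V :=
  [set ubar + x | x in lspan e].

Definition admissible (P : V -> V) (M : set V) (K : nat) (ubar : 'I_K -> V)
    (n : 'I_K -> nat) (e : forall k, 'I_(n k) -> V) (s : R) : Prop :=
  exists (Mk : 'I_K -> set V) (eps : 'I_K -> R),
    M = \bigcup_(k in [set: 'I_K]) Mk k /\
    (forall k l, k != l -> Mk k `&` Mk l = set0) /\
    forall k,
      (forall u, Mk k u -> (dist_set u (affine (ubar k) (e k)) <= (eps k)%:E)%E) /\
      (mu P (lspan (e k)) * (eps k)%:E <= s%:E)%E.

Definition is_pbdw (ip : V -> V -> R) (W : set V) (A : set V) (w x : V) : Prop :=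
  orth ip W (x - w) /\
  forall v, orth ip W (v - w) -> (dist_set x A <= dist_set v A)%E.

End Defs.

(* Main.v *)
Require Import Defs.
From HB Require Import structures.
From mathcomp Require Import all_boot all_order all_algebra.
From mathcomp Require Import all_classical all_reals all_analysis.
From mathcomp Require Import ring lra.
Import Order.TTheory GRing.Theory Num.Theory.
Import numFieldNormedType.Exports.
Set Implicit Arguments. Unset Strict Implicit.
Local Open Scope classical_set_scope.
Local Open Scope ring_scope.

Lemma poly_ineq (R : realType) (m p q t hn s D : R): 1 <= m -> 0 <= p -> 0<=q -> 0<=t -> 0<=hn -> 0 <= s -> 0<= D -> D <= m * p -> D^+2 = p^+2+q^+2 -> s^+2 = p^+2+t^+2 -> hn <= t+q -> hn <= m * s.
Proof.
move=> m1 p0 q0 t0 h0 s0 D0 Dm DE sE ht.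
have q2 : q^+2 <= (m^+2 - 1) * p^+2.
  have mp0 : 0 <= m * p by nra.
  have : D^+2 <= (m * p)^+2 by rewrite !expr2; apply: ler_pM.

  nra.
have XY : 2 * t * q <= (m^+2-1) * t^+2 + p^+2.
  have m21 : 0 <= m^+2 - 1 by nra.
  have X0 : 0 <= (m^+2-1) * t^+2 + p^+2.
    by apply: addr_ge0; [apply: mulr_ge0 | ]; rewrite // sqr_ge0.
  have Y0 : 0 <= 2 * t * q by nra.
  have : (2 * t * q)^+2 <= ((m^+2-1) * t^+2 + p^+2)^+2.
    have h1 : (2 * t * q)^+2 <= 4 * t^+2 * ((m^+2 - 1) * p^+2).
      have -> : (2 * t * q)^+2 = 4 * t^+2 * q^+2 by ring.
      by apply: ler_wpM2l => //; apply: mulr_ge0 => //; rewrite sqr_ge0.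
    have E : ((m^+2-1) * t^+2 + p^+2)^+2 - 4 * t^+2 * ((m^+2-1) * p^+2) = ((m^+2-1) * t^+2 - p^+2)^+2 by ring.
    have := sqr_ge0 ((m^+2-1) * t^+2 - p^+2). lra.
  by rewrite ler_pXn2r // nnegrE.
have : (t+q)^+2 <= (m * s)^+2.
  have -> : (m * s)^+2 = m^+2 * s^+2 by rewrite exprMn.
  rewrite sE.
  have -> : (t+q)^+2 = t^+2 + 2 * t * q + q^+2 by ring.
  have -> : m^+2 * (p^+2 + t^+2) = t^+2 + ((m^+2-1) * t^+2 + p^+2) + (m^+2 - 1) * p^+2 by ring.
  lra.
have tq0 : 0 <= t + q by lra.
have ms0 : 0 <= m * s by nra.
rewrite ler_pXn2r ?nnegrE // => H; lra.
Qed.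

Section IP.
Variables (R : realType) (V : normedModType R) (ip : V -> V -> R).
Hypothesis Hip : is_inner_product ip.

Lemma ipC u v : ip u v = ip v u. Proof. by case: Hip. Qed.
Lemma ipL a u v w : ip (a *: u + v) w = a * ip u w + ip v w.
Proof. by case: Hip => _ []. Qed.
Lemma ipnorm v : ip v v = `|v| ^+ 2. Proof. by case: Hip => _ []. Qed.

Lemma ip0l w : ip 0 w = 0.
Proof.
have := ipL 1 0 0 w; rewrite scaler0 addr0 mul1r => H.
by apply: (addrI (ip 0 w)); rewrite -H addr0.
Qed.
Lemma ipZl a u w : ip (a *: u) w = a * ip u w.
Proof. by have := ipL a u 0 w; rewrite addr0 ip0l addr0. Qed.
Lemma ipDl u v w : ip (u + v) w = ip u w + ip v w.
Proof. by have := ipL 1 u v w; rewrite scale1r mul1r. Qed.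
Lemma ipNl u w : ip (- u) w = - ip u w.
Proof. by rewrite -scaleN1r ipZl mulN1r. Qed.
Lemma ipBl u v w : ip (u - v) w = ip u w - ip v w.
Proof. by rewrite ipDl ipNl. Qed.
Lemma ip0r w : ip w 0 = 0. Proof. by rewrite ipC ip0l. Qed.
Lemma ipZr a u w : ip w (a *: u) = a * ip w u. Proof. by rewrite ipC ipZl ipC. Qed.
Lemma ipDr u v w : ip w (u + v) = ip w u + ip w v. Proof. by rewrite ipC ipDl !(ipC w). Qed.
Lemma ipBr u v w : ip w (u - v) = ip w u - ip w v.
Proof. by rewrite ipC ipBl !(ipC w). Qed.

Lemma ip_suml n (c : 'I_n -> R) (e : 'I_n -> V) w :
  ip (\sum_(i < n) c i *: e i) w = \sum_(i < n) c i * ip (e i) w.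
Proof.
elim/big_rec2: _ => [|i y1 y2 _ <-]; first by rewrite ip0l.
by rewrite ipDl ipZl.
Qed.

Lemma normD2 u v : `|u + v| ^+ 2 = `|u| ^+ 2 + `|v| ^+ 2 + 2 * ip u v.
Proof.
rewrite -!ipnorm ipDl !ipDr (ipC v u); ring.
Qed.

Lemma norm_le_sq (x y : V) : `|x| ^+ 2 <= `|y| ^+ 2 -> `|x| <= `|y|.
Proof. by rewrite ler_pXn2r // nnegrE. Qed.

Lemma orthD W u v : orth ip W u -> orth ip W v -> orth ip W (u + v).
Proof. by move=> hu hv w Ww; rewrite ipDl hu // hv // addr0. Qed.
Lemma orthZ W a u : orth ip W u -> orth ip W (a *: u).
Proof. by move=> hu w Ww; rewrite ipZl hu // mulr0. Qed.
Lemma orthN W u : orth ip W u -> orth ip W (- u).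
Proof. by move=> hu; rewrite -scaleN1r; apply: orthZ. Qed.
Lemma orthB W u v : orth ip W u -> orth ip W v -> orth ip W (u - v).
Proof. by move=> hu hv; apply: orthD => //; apply: orthN. Qed.

Lemma lspan0 n (e : 'I_n -> V) : lspan e 0.
Proof. exists (fun _ => 0) => //. rewrite big1 // => i _. by rewrite scale0r. Qed.
Lemma lspanB n (e : 'I_n -> V) u v : lspan e u -> lspan e v -> lspan e (u - v).
Proof.
move=> [c _ <-] [d _ <-]; exists (fun i => c i - d i) => //=.
by rewrite -sumrB; apply: eq_bigr => i _; rewrite scalerBl.
Qed.
Lemma lspanN n (e : 'I_n -> V) u : lspan e u -> lspan e (- u).
Proof. by move=> hu; rewrite -sub0r; apply: lspanB => //; apply: lspan0. Qed.

Lemma orth_lspan n (e : 'I_n -> V) z : (forall j, ip z (e j) = 0) ->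
  forall v, lspan e v -> ip z v = 0.
Proof.
move=> hz v [c _ <-]; rewrite ipC ip_suml big1 // => i _.
by rewrite ipC hz mulr0.
Qed.

Lemma proj_exists n (e : 'I_n -> V) : lin_indep e -> forall z,
  exists c : 'I_n -> R, forall j, ip (z - \sum_(i < n) c i *: e i) (e j) = 0.
Proof.
move=> he z.
pose G : 'M[R]_n := \matrix_(i, j) ip (e i) (e j).
have key (c : 'rV[R]_n) : c *m G = 0 -> c = 0.
  move=> hc.
  have hj j : ip (\sum_(i < n) c 0 i *: e i) (e j) = 0.
    rewrite ip_suml; have := congr1 (fun M : 'rV[R]_n => M 0 j) hc.
    rewrite !mxE => H; apply: etrans H; apply: eq_bigr => i _; by rewrite /G !mxE.
  have h0 : \sum_(i < n) c 0 i *: e i = 0.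
    have := orth_lspan hj (ex_intro2 _ _ (fun i => c 0 i) I erefl).
    by rewrite ipnorm => /eqP; rewrite sqrf_eq0 normr_eq0 => /eqP.
  apply/rowP => i; rewrite mxE; exact: he h0 i.
have GU : G \in unitmx.
  rewrite -row_free_unit -kermx_eq0; apply/eqP/row_matrixP => i.
  rewrite row0; apply: key; rewrite -row_mul mulmx_ker; exact: row0.
pose r : 'rV[R]_n := \row_j ip z (e j).
pose c := r *m invmx G.
have hc : c *m G = r by rewrite /c mulmxKV.
exists (fun i => c 0 i) => j.
rewrite ipBl ip_suml; have := congr1 (fun M : 'rV[R]_n => M 0 j) hc.
rewrite !mxE => H; rewrite -H; apply/eqP; rewrite subr_eq0; apply/eqP.
by apply: eq_bigr => i _; rewrite /G !mxE.
Qed.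

Lemma dist_proj (ubar : V) n (e : 'I_n -> V) : lin_indep e -> forall z,
  exists a, affine ubar e a /\ (forall v, lspan e v -> ip (z - a) v = 0) /\
    dist_set z (affine ubar e) = (`|z - a|)%:E.
Proof.
move=> he z; have [c hc] := proj_exists he (z - ubar).
pose a := ubar + \sum_(i < n) c i *: e i.
have ha : affine ubar e a by exists (\sum_(i < n) c i *: e i) => //; exists c.
have hort : forall v, lspan e v -> ip (z - a) v = 0.
  by apply: orth_lspan => j; rewrite /a opprD addrA; exact: hc.
exists a; split=> //; split=> //.
apply/eqP; rewrite eq_le; apply/andP; split.
  by apply: ereal_inf_lbound; exists a.
apply: le_ereal_inf_tmp => _ [y [x hx <-] <-]; rewrite lee_fin.
apply: norm_le_sq.
have -> : z - (ubar + x) = (z - a) + (a - (ubar + x)) by rewrite addrA subrK.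
rewrite [X in _ <= X]normD2 hort ?mulr0 ?addr0 ?lerDl ?sqr_ge0 //.
rewrite /a opprD addrA (addrC ubar) addrK; apply: lspanB => //; by exists c.
Qed.


Lemma key_bound (W : set V) (P : V -> V) n (e : 'I_n -> V) :
  is_orth_proj ip W P -> lspan e `&` orth ip W = [set 0] ->
  forall h d, orth ip W h -> lspan e d ->
  (`|h|%:E <= mu P (lspan e) * `|h + d|%:E)%E.
Proof.
move=> HP HVW h d hh hd.
have Pyth v : `|v| ^+ 2 = `|P v| ^+ 2 + `|v - P v| ^+ 2.
  have {1}-> : v = P v + (v - P v) by rewrite addrC subrK.
  have [HW Ho] := HP v.
  by rewrite [LHS]normD2 ipC Ho // mulr0 addr0.
have inter v : lspan e v -> orth ip W v -> v = 0.
  by move=> h1 h2; have : (lspan e `&` orth ip W) v by []; rewrite HVW.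
have PvN0 v : lspan e v -> v != 0 -> 0 < `|P v|.
  move=> hv vN0; rewrite normr_gt0; apply/negP => /eqP Pv0.
  have := (HP v).2; rewrite Pv0 subr0 => /(inter v hv) /eqP; exact/negP.
have PvLe v : `|P v| <= `|v|.
  by apply: norm_le_sq; rewrite (Pyth v) lerDl sqr_ge0.
have ratio v : lspan e v -> v != 0 -> ((`|v| / `|P v|)%:E <= mu P (lspan e))%E.
  move=> hv vN0; rewrite /mu; case: asboolP => [hsub|_].
    by have := hsub v hv => /= /eqP; rewrite (negbTE vN0).
  apply: ereal_sup_ubound; exists v => //; split => //=; exact/eqP.
have mu1 : (1 <= mu P (lspan e))%E.
  case: (asboolP (lspan e `<=` [set 0])) => [hsub|hsub].
    by rewrite /mu asboolT.
  have [v [hv vN0]] : exists v, lspan e v /\ v <> 0.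
    apply: contrapT => H; apply: hsub => v hv /=.
    by apply: contrapT => vN0; apply: H; exists v.
  apply: le_trans (ratio v hv (introN eqP vN0)); rewrite lee_fin.
  by rewrite ler_pdivlMr ?mul1r ?PvLe // PvN0 //; apply/eqP.
case Emu : (mu P (lspan e)) mu1 => [m| |] //; last first.
  move=> _; have [hd0|hd0] := eqVneq (h + d) 0.
    have h0 : h = 0.
      apply: inter => //; have -> : h = - d by apply/eqP; rewrite -subr_eq0 opprK hd0.
      exact: lspanN.
    by rewrite hd0 normr0 h0 normr0 mule0.
  by rewrite gt0_mulye ?leey // lte_fin normr_gt0.
rewrite !lee_fin => m1.
have Dm : `|d| <= m * `|P d|.
  have [->|dN0] := eqVneq d 0; first by rewrite normr0 mulr_ge0 // (le_trans ler01).
  have := ratio d hd dN0; rewrite Emu lee_fin ler_pdivrMr //; exact: PvN0.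
apply: (@poly_ineq _ m (`|P d|) (`|d - P d|) (`|h + (d - P d)|) _ _ (`|d|)) => //.
- have -> : h + d = P d + (h + (d - P d)) by rewrite addrCA (addrC (P d)) subrK.
  have [HW Ho] := HP d.
  rewrite normD2 ipC (orthD hh Ho) // mulr0 addr0 //.
- by have := ler_normB (h + (d - P d)) (d - P d); rewrite addrK.
Qed.

Lemma mu_ge0 (P : V -> V) (S : set V) : (0 <= mu P S)%E.
Proof.
rewrite /mu; case: asboolP => [_|hsub]; first by rewrite lee_fin ler01.
have [v [hv vN0]] : exists v, S v /\ v <> 0.
  apply: contrapT => H; apply: hsub => v hv /=.
  by apply: contrapT => vN0; apply: H; exists v.
apply: le_trans (ereal_sup_ubound _); last first.
  by exists v => //; split => //=; exact/eqP.
by rewrite lee_fin divr_ge0.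
Qed.

Lemma pbdw_err (W : set V) (P : V -> V) (ubar : V) n (e : 'I_n -> V) :
  is_orth_proj ip W P -> lin_indep e -> lspan e `&` orth ip W = [set 0] ->
  forall w u x, orth ip W (u - w) -> is_pbdw ip W (affine ubar e) w x ->
  (`|u - x|%:E <= mu P (lspan e) * dist_set u (affine ubar e))%E.
Proof.
move=> HP he HVW w u x hu [hx hmin].
have [a [ha [hort hda]]] := dist_proj ubar he x.
have [au [hau [_ hdau]]] := dist_proj ubar he u.
have eta_orth y : orth ip W y -> ip (x - a) y = 0.
  move=> hy; set s := ip (x - a) y; set Y := `|y| ^+ 2.
  have H t : 0 <= 2 * t * s + t ^+ 2 * Y.
    have feas : orth ip W (x + t *: y - w).
      by rewrite addrAC; apply: orthD hx (orthZ t hy).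
    have := hmin _ feas; rewrite hda => H1.
    have H2 : (dist_set (x + t *: y)%R (affine ubar e) <= (`|x + t *: y - a|)%:E)%E.
      by apply: ereal_inf_lbound; exists a.
    have := le_trans H1 H2; rewrite lee_fin -(ler_pXn2r (n:=2)) ?nnegrE //.
    rewrite addrAC [X in _ <= X -> _]normD2 normrZ exprMn ipZr -/s -/Y real_normK ?num_real //.
    lra.
  have Y0 : 0 <= Y by rewrite sqr_ge0.
  have := H (- s / (Y + 1)).
  set t := - s / (Y + 1) => Ht.
  have tk : t * (Y + 1) = - s by rewrite /t divfK // gt_eqF // ltr_pwDr.
  have : 0 <= (2 * t * s + t ^+ 2 * Y) * (Y + 1) ^+ 2.
    by apply: mulr_ge0 => //; rewrite sqr_ge0.
  have -> : (2 * t * s + t ^+ 2 * Y) * (Y + 1) ^+ 2 =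
     2 * (t * (Y + 1)) * s * (Y + 1) + (t * (Y + 1)) ^+ 2 * Y by ring.
  rewrite tk => H3.
  have : s ^+ 2 * (Y + 2) <= 0 by nra.
  have s2 := sqr_ge0 s.
  nra.
have hh : orth ip W (u - x).
  have -> : u - x = (u - w) - (x - w) by rewrite opprB addrA subrK.
  exact: orthB.
have hd : lspan e (a - au).
  case: ha => xa hxa <-; case: hau => xb hxb <-.
  by rewrite opprD addrACA subrr add0r; apply: lspanB.
have hg : `|u - x + (a - au)| <= `|u - au|.
  apply: norm_le_sq.
  have -> : u - au = (u - x + (a - au)) + (x - a).
    by rewrite -addrA (addrC (a - au)) [(x - a) + _]addrA subrK addrA subrK.
  rewrite [X in _ <= X]normD2 ipC ipDr eta_orth // hort // addr0 mulr0 addr0.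
  by rewrite lerDl sqr_ge0.
apply: le_trans (key_bound HP HVW hh hd) _.
rewrite hdau; apply: lee_wpmul2l; first exact: mu_ge0.
by rewrite lee_fin.
Qed.

End IP.

Theorem mainTheorem14 (R : realType) (V : completeNormedModType R)
  (ip : V -> V -> R) (Hip : is_inner_product ip)
  (M : set V) (HM : compact M)
  (m : nat) (b : 'I_m -> V) (Hb : lin_indep b)
  (P : V -> V) (HP : is_orth_proj ip (lspan b) P)
  (K : nat) (ubar : 'I_K -> V) (n : 'I_K -> nat) (e : forall k, 'I_(n k) -> V)
  (Hn : forall k, (n k <= m)%N)
  (He : forall k, lin_indep (e k))
  (HeW : forall k, lspan (e k) `&` orth ip (lspan b) = [set 0])
  (sigma : R) (Hsigma : 0 < sigma)
  (Hadm : admissible P M ubar e sigma)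
  (ustar : 'I_K -> V -> V)
  (Hustar : forall k w, lspan b w -> is_pbdw ip (lspan b) (affine (ubar k) (e k)) w (ustar k w)) :
  (forall kstar : V -> 'I_K,
     (forall w, lspan b w -> forall k,
        (dist_set (ustar (kstar w) w) M <= dist_set (ustar k w) M)%E) ->
     (ereal_sup [set (`|u - ustar (kstar (P u)) (P u)|)%:E | u in M]
        <= delta ip (lspan b) M sigma)%E) /\
  (forall (S : V -> R) (r Rc : R), 0 < r -> r <= Rc ->
     (forall v, 0 <= S v) ->
     (forall v, (r%:E * dist_set v M <= (S v)%:E)%E /\
                ((S v)%:E <= Rc%:E * dist_set v M)%E) ->
     forall kstar : V -> 'I_K,
     (forall w, lspan b w -> forall k, S (ustar (kstar w) w) <= S (ustar k w)) ->
     (ereal_sup [set (`|u - ustar (kstar (P u)) (P u)|)%:E | u in M]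
        <= delta ip (lspan b) M (Rc / r * sigma))%E).
Proof.
have Pw u : lspan b (P u) := (HP u).1.
have distM x u : M u -> (dist_set x M <= (`|u - x|)%:E)%E.
  by move=> Mu; apply: ereal_inf_lbound; exists u => //; rewrite distrC.
have core u : M u -> exists k, `|u - ustar k (P u)| <= sigma.
  move=> Mu; case: Hadm => Mk [eps [HMk [_ Hk]]].
  have : (\bigcup_(k in [set: 'I_K]) Mk k) u by rewrite -HMk.
  case=> k _ hk; exists k.
  have [hdist hmu] := Hk k.
  have H := pbdw_err Hip (HP) (He k) (HeW k) (HP u).2 (Hustar k (P u) (Pw u)).
  rewrite -lee_fin; apply: le_trans H _; apply: le_trans hmu.
  apply: lee_wpmul2l; [exact: mu_ge0 | exact: hdist].
have orthux u k : orth ip (lspan b) (u - ustar k (P u)).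
  have -> : u - ustar k (P u) = (u - P u) - (ustar k (P u) - P u).
    by rewrite opprB addrA subrK.
  apply: (orthB Hip); [exact: (HP u).2 | exact: (Hustar k (P u) (Pw u)).1].
have Mself s u : 0 <= s -> M u -> Msig M s u.
  move=> s0 Mu; apply: le_trans (distM u u Mu) _; by rewrite subrr normr0 lee_fin.
split.
  move=> kstar hk; apply: ge_ereal_sup => _ [u Mu <-].
  have [k hk'] := core u Mu.
  apply: ereal_sup_ubound; exists u, (ustar (kstar (P u)) (P u)); split => //.
  - exact: Mself (ltW Hsigma) Mu.
  - apply: le_trans (hk _ (Pw u) k) _; apply: le_trans (distM _ u Mu) _.
    by rewrite lee_fin.
move=> S r Rc r0 rR S0 HS kstar hk; apply: ge_ereal_sup => _ [u Mu <-].
have [k hk'] := core u Mu.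
have Rc0 : 0 < Rc by apply: lt_le_trans rR.
have pos : 0 <= Rc / r * sigma by apply: mulr_ge0; [apply: divr_ge0|]; apply: ltW.
apply: ereal_sup_ubound; exists u, (ustar (kstar (P u)) (P u)); split => //.
- exact: Mself pos Mu.
- set x := ustar (kstar (P u)) (P u).
  have Sk : S (ustar k (P u)) <= Rc * sigma.
    rewrite -lee_fin; apply: le_trans (HS _).2 _; rewrite EFinM.
    apply: lee_wpmul2l; first by rewrite lee_fin ltW.
    apply: le_trans (distM _ u Mu) _; by rewrite lee_fin.
  have Sx : S x <= Rc * sigma := le_trans (hk _ (Pw u) k) Sk.
  have := (HS x).1; rewrite /Msig /=.
  case Ed : (dist_set x M) (distM x u Mu) => [d| |] //.
  rewrite !lee_fin => _ H; rewrite mulrAC ler_pdivlMr // mulrC.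
  exact: le_trans H Sx.
by move=> *; exact: leNye.
Qed.
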